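(* Assume the Jacobi parameters of $\rho$ satisfy $0<\inf_n a_n\le\sup_n a_n<\infty$, and let $x_0\in\mathbb{R}$. Then the following three conditions are equivalent: (a) $\rho$ satisfies the Nevai condition at $x_0$; (b) $\int (x-x_0)^2\,d\eta_n^{(x_0)}(x)\to0$ as $n\to\infty$; (c) $\displaystyle \lim_{n\to\infty}\frac{p_n(x_0)^2}{\sum_{j=0}^n p_j(x_0)^2}=0$.
   Context: Let $\rho$ be a probability measure on $\mathbb{R}$ with compact but infinite support, $p_n$ ($n\ge0$) its orthonormal polynomials (real coefficients, positive leading coefficient, $p_0=1$), and $\{a_n,b_n\}_{n\ge1}$ ($a_n>0$, $b_n\in\mathbb{R}$) its Jacobi parameters, defined by $xp_n(x)=a_{n+1}p_{n+1}(x)+b_{n+1}p_n(x)+a_np_{n-1}(x)$ with $p_{-1}=0$. Set $K_n(x,y)=\sum_{j=0}^n p_j(x)p_j(y)$. For $x_0\in\mathbb{R}$ let $\eta_n^{(x_0)}$ be the probability measure $d\eta_n^{(x_0)}(x)=K_n(x,x_0)^2\,d\rho(x)/K_n(x_0,x_0)$. We say $\rho$ satisfies the Nevai condition at $x_0$ if $\eta_n^{(x_0)}\to\delta_{x_0}$ weakly as $n\to\infty$. *)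

(* Defs.v *)
From Stdlib Require Import Reals Lra List.
Open Scope R_scope.

(* A compactly supported probability measure rho on R, represented (Riesz)
   by its integration functional I f = \int f d rho on continuous functions. *)
Definition is_prob_functional (I : (R -> R) -> R) : Prop :=
  (forall f g, continuity f -> continuity g ->
     I (fun x => f x + g x) = I f + I g) /\
  (forall (r : R) f, continuity f -> I (fun x => r * f x) = r * I f) /\
  (forall f, continuity f -> (forall x, 0 <= f x) -> 0 <= I f) /\
  I (fun _ => 1) = 1.

(* compact support: supp rho is contained in some [A,B] *)
Definition compact_support (I : (R -> R) -> R) : Prop :=
  exists A B : R, forall f, continuity f ->
    (forall x, A <= x <= B -> f x = 0) -> I f = 0.

(* infinite support: supp rho is not contained in any finite set F *)
Definition infinite_support (I : (R -> R) -> R) : Prop :=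
  forall F : list R, exists f, continuity f /\
    (forall x, In x F -> f x = 0) /\ I f <> 0.

Definition poly_deg_pos_lead (n : nat) (q : R -> R) : Prop :=
  exists c : nat -> R, 0 < c n /\
    forall x, q x = sum_f_R0 (fun k => c k * x ^ k) n.

Definition orthonormal_polys (I : (R -> R) -> R) (p : nat -> R -> R) : Prop :=
  (forall n, poly_deg_pos_lead n (p n)) /\
  (forall m n, I (fun x => p m x * p n x) = if Nat.eqb m n then 1 else 0).

(* {a_n, b_n}_{n>=1} are the Jacobi parameters (a 0, b 0 unused):
   x p_n = a_{n+1} p_{n+1} + b_{n+1} p_n + a_n p_{n-1}, p_{-1} = 0 *)
Definition jacobi_params (p : nat -> R -> R) (a b : nat -> R) : Prop :=
  (forall n, (1 <= n)%nat -> 0 < a n) /\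
  (forall n x, x * p n x =
     a (S n) * p (S n) x + b (S n) * p n x +
     match n with O => 0 | S m => a n * p m x end).

Definition Kn (p : nat -> R -> R) (n : nat) (x y : R) : R :=
  sum_f_R0 (fun j => p j x * p j y) n.

Definition eta_int (I : (R -> R) -> R) (p : nat -> R -> R) (x0 : R)
    (n : nat) (f : R -> R) : R :=
  I (fun x => Kn p n x x0 ^ 2 * f x) / Kn p n x0 x0.

(* Nevai condition: eta_n^{(x0)} -> delta_{x0} weakly *)
Definition nevai (I : (R -> R) -> R) (p : nat -> R -> R) (x0 : R) : Prop :=
  forall f, continuity f -> (exists M, forall x, Rabs (f x) <= M) ->
    Un_cv (fun n => eta_int I p x0 n f) (f x0).

(* Main.v *)
Require Import Defs.
From Stdlib Require Import Reals Lra Psatz FunctionalExtensionality.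
Open Scope R_scope.

Lemma cplus f g : continuity f -> continuity g -> continuity (fun x => f x + g x).
Proof. intros; apply (continuity_plus f g); auto. Qed.
Lemma cmult f g : continuity f -> continuity g -> continuity (fun x => f x * g x).
Proof. intros; apply (continuity_mult f g); auto. Qed.
Lemma cconst c : continuity (fun _ => c).
Proof. apply continuity_const; intros ? ?; reflexivity. Qed.
Lemma cid : continuity (fun x => x).
Proof. apply derivable_continuous, derivable_id. Qed.
Lemma cminus f g : continuity f -> continuity g -> continuity (fun x => f x - g x).
Proof. intros; apply (continuity_minus f g); auto. Qed.
Lemma cpow f n : continuity f -> continuity (fun x => f x ^ n).
Proof. intros H; induction n; simpl. apply cconst. apply cmult; auto. Qed.
Lemma copp f : continuity f -> continuity (fun x => - f x).
Proof. intros; apply (continuity_opp f); auto. Qed.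
Lemma cabs f : continuity f -> continuity (fun x => Rabs (f x)).
Proof. intros H x. apply (continuity_pt_comp f Rabs); auto. apply Rcontinuity_abs. Qed.

Ltac cont := repeat first [ apply cminus | apply cplus | apply copp | apply cmult | apply cpow | apply cabs
  | apply cid | apply cconst | assumption ].

Lemma cpoly c n : continuity (fun x => sum_f_R0 (fun k => c k * x ^ k) n).
Proof. induction n; simpl. cont. cont. Qed.

Lemma abs_inv y b : Rabs y <= b -> - b <= y <= b.
Proof. unfold Rabs; destruct Rcase_abs; lra. Qed.

Section S.
Variable I : (R -> R) -> R.
Hypothesis HI : is_prob_functional I.

Lemma I_ext f g : (forall x, f x = g x) -> I f = I g.
Proof. intros H. f_equal. apply functional_extensionality; auto. Qed.

Lemma I_comb2 f g r s : continuity f -> continuity g ->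
  I (fun x => r * f x + s * g x) = r * I f + s * I g.
Proof. destruct HI as [Ha [Hs _]]. intros. rewrite Ha by cont. rewrite !Hs; auto. Qed.

Lemma I_comb3 f g h r s t : continuity f -> continuity g -> continuity h ->
  I (fun x => r * f x + s * g x + t * h x) = r * I f + s * I g + t * I h.
Proof. destruct HI as [Ha [Hs _]]. intros. rewrite Ha by cont. rewrite Ha by cont. rewrite !Hs; auto. Qed.

Lemma I_add f g : continuity f -> continuity g -> I (fun x => f x + g x) = I f + I g.
Proof. destruct HI as [Ha _]. auto. Qed.

Lemma I_scal f r : continuity f -> I (fun x => r * f x) = r * I f.
Proof. destruct HI as [_ [Hs _]]. auto. Qed.

Lemma I_sub f g : continuity f -> continuity g -> I (fun x => f x - g x) = I f - I g.
Proof. intros. rewrite (I_ext _ (fun x => 1 * f x + (-1) * g x)) by (intros; ring).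
  rewrite I_comb2 by auto. ring. Qed.

Lemma I_mono f g : continuity f -> continuity g -> (forall x, f x <= g x) -> I f <= I g.
Proof. destruct HI as [_ [_ [Hp _]]]. intros. 
  assert (0 <= I (fun x => g x - f x)).
  { apply Hp. cont. intros x; specialize (H1 x); lra. }
  rewrite I_sub in H2 by auto. lra. Qed.

Lemma I_abs f g : continuity f -> continuity g -> (forall x, Rabs (f x) <= g x) -> Rabs (I f) <= I g.
Proof. intros. apply Rabs_le. split.
  - rewrite (I_ext f (fun x => (-1) * (- f x))) by (intros; ring). rewrite I_scal by cont.
    assert (I (fun x => - f x) <= I g). apply I_mono; cont. intros x; specialize (H1 x).
    apply abs_inv in H1; lra. lra.
  - apply I_mono; auto. intros x; specialize (H1 x). apply abs_inv in H1; lra.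
Qed.

Lemma I_const c : I (fun _ => c) = c.
Proof. destruct HI as [_ [_ [_ H1]]]. rewrite (I_ext _ (fun x => c * 1)) by (intros; ring).
  rewrite I_scal by cont. rewrite H1; ring. Qed.

Variable p : nat -> R -> R.
Hypothesis Hp : orthonormal_polys I p.

Lemma p_cont n : continuity (p n).
Proof. destruct Hp as [Hd _]. destruct (Hd n) as [c [_ Hc]].
  replace (p n) with (fun x => sum_f_R0 (fun k => c k * x ^ k) n).
  apply cpoly. apply functional_extensionality; intros; rewrite Hc; auto. Qed.

Lemma Kn_S n x y : Kn p (S n) x y = Kn p n x y + p (S n) x * p (S n) y.
Proof. reflexivity. Qed.

Lemma Kn_cont n y : continuity (fun x => Kn p n x y).
Proof. induction n. unfold Kn; simpl. pose proof (p_cont 0). cont.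
  assert (continuity (p (S n))) by apply p_cont.
  change (continuity (fun x => Kn p n x y + p (S n) x * p (S n) y)). cont. Qed.

Lemma p_orth m n : I (fun x => p m x * p n x) = if Nat.eqb m n then 1 else 0.
Proof. destruct Hp as [_ H]; auto. Qed.

Lemma Kn_orth n m y : (n < m)%nat -> I (fun x => Kn p n x y * p m x) = 0.
Proof. pose proof (p_cont m) as Hm. induction n; intros Hnm.
  - unfold Kn; simpl. rewrite (I_ext _ (fun x => p 0 y * (p 0 x * p m x))) by (intros; ring).
    rewrite I_scal by (pose proof (p_cont 0); cont). rewrite p_orth.
    destruct m; [lia|]. simpl. ring.
  - rewrite (I_ext _ (fun x => 1 * (Kn p n x y * p m x) + p (S n) y * (p (S n) x * p m x)))
      by (intros; rewrite Kn_S; ring).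
    pose proof (Kn_cont n y). pose proof (p_cont (S n)).
    rewrite I_comb2 by cont. rewrite IHn by lia. rewrite p_orth.
    replace (Nat.eqb (S n) m) with false. ring. symmetry; apply Nat.eqb_neq; lia. Qed.

Lemma Kn_sq n y : I (fun x => Kn p n x y ^ 2) = Kn p n y y.
Proof. induction n.
  - unfold Kn; simpl. rewrite (I_ext _ (fun x => (p 0 y * p 0 y) * (p 0 x * p 0 x))) by (intros; ring).
    rewrite I_scal by (pose proof (p_cont 0); cont). rewrite p_orth. simpl. ring.
  - pose proof (Kn_cont n y). pose proof (p_cont (S n)).
    rewrite (I_ext _ (fun x => 1 * (Kn p n x y ^ 2) + (2 * p (S n) y) * (Kn p n x y * p (S n) x)
       + (p (S n) y * p (S n) y) * (p (S n) x * p (S n) x))) by (intros; rewrite Kn_S; ring).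
    rewrite I_comb3 by cont. rewrite IHn, Kn_orth, p_orth by lia. rewrite Nat.eqb_refl.
    rewrite Kn_S. ring. Qed.

Lemma p0_pos x : 0 < p 0 x.
Proof. destruct Hp as [Hd _]. destruct (Hd 0%nat) as [c [Hc0 Hc]]. rewrite Hc. simpl. lra. Qed.

Lemma Kn_pos n y : 0 < Kn p n y y.
Proof. induction n. unfold Kn; simpl. pose proof (p0_pos y). nra.
  rewrite Kn_S. nra. Qed.

Variables a b : nat -> R.
Hypothesis Hj : jacobi_params p a b.

Lemma CD n x y : (x - y) * Kn p n x y = a (S n) * (p (S n) x * p n y - p n x * p (S n) y).
Proof. destruct Hj as [_ Hr]. induction n.
  - unfold Kn; simpl. pose proof (Hr 0%nat x) as H1. pose proof (Hr 0%nat y) as H2. simpl in *.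
    replace ((x - y) * (p 0 x * p 0 y)) with ((x * p 0 x) * p 0 y - (y * p 0 y) * p 0 x) by ring.
    rewrite H1, H2. ring.
  - rewrite Kn_S.
    replace ((x - y) * (Kn p n x y + p (S n) x * p (S n) y)) with
      ((x - y) * Kn p n x y + ((x * p (S n) x) * p (S n) y - (y * p (S n) y) * p (S n) x)) by ring.
    rewrite IHn. rewrite (Hr (S n) x), (Hr (S n) y). ring. Qed.

Lemma eta_sq x0 n : eta_int I p x0 n (fun x => (x - x0) ^ 2) =
  a (S n) ^ 2 * (p n x0 ^ 2 + p (S n) x0 ^ 2) / Kn p n x0 x0.
Proof. unfold eta_int. f_equal.
  pose proof (p_cont n). pose proof (p_cont (S n)).
  rewrite (I_ext _ (fun x => (a (S n) ^ 2 * p n x0 ^ 2) * (p (S n) x * p (S n) x)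
     + (- 2 * a (S n) ^ 2 * p n x0 * p (S n) x0) * (p (S n) x * p n x)
     + (a (S n) ^ 2 * p (S n) x0 ^ 2) * (p n x * p n x))).
  rewrite I_comb3 by cont. rewrite !p_orth. rewrite !Nat.eqb_refl.
  replace (Nat.eqb (S n) n) with false by (symmetry; apply Nat.eqb_neq; lia). ring.
  intros x. replace (Kn p n x x0 ^ 2 * (x - x0) ^ 2) with (((x - x0) * Kn p n x x0) ^ 2) by ring.
  rewrite CD. ring. Qed.
End S.

Lemma cont_eps f x0 eps : continuity f -> eps > 0 ->
  exists d, d > 0 /\ forall x, Rabs (x - x0) < d -> Rabs (f x - f x0) < eps.
Proof. intros Hc He. destruct (Hc x0 eps He) as [d [Hd H]]. exists d; split; auto.
  intros x Hx. destruct (Req_dec x x0) as [->|Hne].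
  - unfold Rminus; rewrite Rplus_opp_r, Rabs_R0; lra.
  - apply (H x). split. split. exact I. auto. exact Hx. Qed.

Lemma squeeze u v K N : 0 <= K -> (forall n, (N <= n)%nat -> Rabs (u n) <= K * Rabs (v n)) ->
  Un_cv v 0 -> Un_cv u 0.
Proof. intros HK Hb Hv eps He. destruct (Hv (eps / (K + 1))) as [N1 HN1].
  apply Rdiv_lt_0_compat; lra.
  exists (max N N1). intros n Hn. unfold Rdist in *. rewrite Rminus_0_r.
  specialize (HN1 n ltac:(lia)). rewrite Rminus_0_r in HN1. specialize (Hb n ltac:(lia)).
  assert (K * Rabs (v n) <= K * (eps / (K+1))) by (apply Rmult_le_compat_l; lra).
  assert (K * (eps / (K+1)) < eps).
  { unfold Rdiv. apply Rmult_lt_reg_r with (K+1). lra.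
    rewrite Rmult_assoc, Rmult_assoc, Rinv_l by lra. nra. }
  lra. Qed.

Lemma frac_bound P Sn : 0 < Sn -> 0 <= P -> P / (Sn + P) <= 1/2 -> P / Sn <= 2 * (P / (Sn + P)).
Proof. intros HS HP Ht.
  assert (P <= Sn).
  { apply Rmult_le_compat_r with (r := Sn + P) in Ht; [|lra].
    unfold Rdiv in Ht. rewrite Rmult_assoc, Rinv_l in Ht by lra. lra. }
  unfold Rdiv. apply Rmult_le_reg_r with (Sn * (Sn + P)). nra.
  replace (P * / Sn * (Sn * (Sn + P))) with (P * (Sn + P)) by (field; lra).
  replace (2 * (P * / (Sn + P)) * (Sn * (Sn + P))) with (2 * P * Sn) by (field; lra).
  nra. Qed.

Lemma hb c a S P2 Q2 : 0 < c -> c <= a -> 0 < S -> 0 <= P2 -> 0 <= Q2 ->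
  P2 / S <= 1 / c ^ 2 * (a ^ 2 * (P2 + Q2) / S).
Proof. intros. assert (0 < c^2) by (apply pow_lt; lra). unfold Rdiv. apply Rmult_le_reg_r with (c ^ 2 * S). nra.
  replace (P2 * / S * (c ^ 2 * S)) with (c^2 * P2) by (field; lra).
  replace (1 * / c ^ 2 * (a ^ 2 * (P2 + Q2) * / S) * (c ^ 2 * S)) with (a^2 * (P2+Q2)) by (field; lra).
  assert (c^2 <= a^2) by nra. nra. Qed.

Lemma hc a C S P2 Q2 : 0 < a -> a <= C -> 0 < S -> 0 <= P2 -> 0 <= Q2 ->
  Q2 / (S + Q2) <= 1/2 ->
  a ^ 2 * (P2 + Q2) / S <= 2 * C ^ 2 * (P2 / S + Q2 / (S + Q2)).
Proof. intros. pose proof (frac_bound Q2 S H1 H3 H4).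
  assert (0 <= P2 / S) by (apply Rmult_le_pos; [lra| left; apply Rinv_0_lt_compat; lra]).
  assert (0 <= Q2 / (S + Q2)) by (apply Rmult_le_pos; [lra| left; apply Rinv_0_lt_compat; lra]).
  replace (a ^ 2 * (P2 + Q2) / S) with (a^2 * (P2 / S + Q2 / S)) by (field; lra).
  assert (a^2 <= C^2) by nra.
  assert (0 <= Q2 / S) by (apply Rmult_le_pos; [lra| left; apply Rinv_0_lt_compat; lra]).
  apply Rle_trans with (C^2 * (P2 / S + Q2 / S)). apply Rmult_le_compat_r; lra. nra. Qed.

Lemma gmin t M : 0 <= t -> 0 <= M ->
  Rabs ((t + M - Rabs (t - M)) / 2) <= M /\ (t <= M -> (t + M - Rabs (t - M)) / 2 = t).
Proof. intros Ht HM. destruct (Rcase_abs (t - M)) as [Hl|Hr].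
  - rewrite (Rabs_left _ Hl). rewrite Rabs_right by lra. split; intros; lra.
  - rewrite (Rabs_right _ Hr). rewrite Rabs_right by lra. split; intros; lra. Qed.

Lemma shift u : Un_cv u 0 -> Un_cv (fun n => u (S n)) 0.
Proof. intros H eps He. destruct (H eps He) as [N HN]. exists N. intros; apply HN; lia. Qed.

Theorem theorem2p2 (I : (R -> R) -> R) (p : nat -> R -> R) (a b : nat -> R)
  (x0 : R) :
  is_prob_functional I -> compact_support I -> infinite_support I ->
  orthonormal_polys I p -> jacobi_params p a b ->
  (exists c C : R, 0 < c /\ forall n, (1 <= n)%nat -> c <= a n <= C) ->
  (nevai I p x0 <->
     Un_cv (fun n => eta_int I p x0 n (fun x => (x - x0) ^ 2)) 0) /\
  (Un_cv (fun n => eta_int I p x0 n (fun x => (x - x0) ^ 2)) 0 <->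
     Un_cv (fun n => p n x0 ^ 2 / sum_f_R0 (fun j => p j x0 ^ 2) n) 0).
Proof.
  intros HI Hcs _ Hp Hj [c [C [Hc Hac]]].
  assert (HS : forall n, 0 < Kn p n x0 x0) by (intro; apply (Kn_pos I p Hp)).
  assert (Hsum : forall n, sum_f_R0 (fun j => p j x0 ^ 2) n = Kn p n x0 x0).
  { intro n; unfold Kn; apply sum_eq; intros; ring. }
  assert (HB : (fun n => eta_int I p x0 n (fun x => (x - x0) ^ 2)) =
     (fun n => a (S n) ^ 2 * (p n x0 ^ 2 + p (S n) x0 ^ 2) / Kn p n x0 x0)).
  { apply functional_extensionality; intro n; apply (eta_sq I HI p Hp a b Hj). }
  assert (Hu : (fun n => p n x0 ^ 2 / sum_f_R0 (fun j => p j x0 ^ 2) n) =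
     (fun n => p n x0 ^ 2 / Kn p n x0 x0)).
  { apply functional_extensionality; intro n; rewrite Hsum; auto. }
  split.
  2:{ rewrite HB, Hu. split; intro H.
    - apply (squeeze _ (fun n => a (S n) ^ 2 * (p n x0 ^ 2 + p (S n) x0 ^ 2) / Kn p n x0 x0) (1 / c ^ 2) 0%nat). 
      + left; apply Rmult_lt_0_compat; [lra| apply Rinv_0_lt_compat; nra].
      + intros n _. specialize (Hac (S n) ltac:(lia)). specialize (HS n).
        rewrite !Rabs_right. apply hb; try nra.
        * apply Rle_ge, Rmult_le_pos; [nra| left; apply Rinv_0_lt_compat; lra].
        * apply Rle_ge, Rmult_le_pos; [nra| left; apply Rinv_0_lt_compat; lra].
      + exact H.
    - destruct (H (1/2) ltac:(lra)) as [N HN].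
      apply (squeeze (fun n => a (S n) ^ 2 * (p n x0 ^ 2 + p (S n) x0 ^ 2) / Kn p n x0 x0) (fun n => p n x0 ^ 2 / Kn p n x0 x0 + p (S n) x0 ^ 2 / Kn p (S n) x0 x0)
        (2 * C ^ 2) N).
      + nra.
      + intros n Hn. specialize (Hac (S n) ltac:(lia)). pose proof (HS n).
        specialize (HN (S n) ltac:(lia)). unfold Rdist in HN. rewrite Rminus_0_r in HN.
        rewrite Kn_S in *.
        assert (Hq : p (S n) x0 * p (S n) x0 = p (S n) x0 ^ 2) by ring. rewrite Hq in *.
        assert (0 <= p (S n) x0 ^ 2 / (Kn p n x0 x0 + p (S n) x0 ^ 2)).
        { apply Rmult_le_pos; [nra| left; apply Rinv_0_lt_compat; nra]. }
        assert (0 <= p n x0 ^ 2 / Kn p n x0 x0).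
        { apply Rmult_le_pos; [nra| left; apply Rinv_0_lt_compat; nra]. }
        rewrite Rabs_right in HN by lra.
        rewrite !Rabs_right.
        * apply hc; nra.
        * lra.
        * apply Rle_ge, Rmult_le_pos; [nra| left; apply Rinv_0_lt_compat; lra].
      + pose proof (CV_plus _ _ 0 0 H (shift _ H)) as H2. rewrite Rplus_0_r in H2. exact H2.
  }
  destruct Hcs as [A [B HAB]].
  assert (Isupp : forall f g, continuity f -> continuity g ->
     (forall x, A <= x <= B -> f x = g x) -> I f = I g).
  { intros f g Hf Hg Hfg. assert (H : I (fun x => f x - g x) = 0).
    { apply HAB. cont. intros x Hx; rewrite Hfg; auto; ring. }
    rewrite (I_sub I HI) in H by auto. lra. }
  pose proof (Kn_cont I p Hp) as HKc.
  split; intro H.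
  - set (M0 := (Rabs (A - x0) + Rabs (B - x0)) ^ 2).
    assert (HM0 : 0 <= M0) by (unfold M0; apply pow2_ge_0).
    set (g := fun x => ((x - x0) ^ 2 + M0 - Rabs ((x - x0) ^ 2 - M0)) / 2).
    assert (Hg : continuity g) by (unfold g; cont).
    assert (Hgb : forall x, Rabs (g x) <= M0).
    { intro x; apply gmin; auto; apply pow2_ge_0. }
    assert (Hgx0 : g x0 = 0).
    { unfold g. replace ((x0 - x0) ^ 2) with 0 by ring. apply gmin; lra. }
    specialize (H g Hg (ex_intro _ M0 Hgb)). rewrite Hgx0 in H.
    replace (fun n => eta_int I p x0 n (fun x => (x - x0) ^ 2)) with
      (fun n => eta_int I p x0 n g). exact H.
    apply functional_extensionality; intro n. unfold eta_int. f_equal.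
    pose proof (HKc n x0). apply Isupp; cont.
    intros x Hx. f_equal. unfold g. apply gmin. apply pow2_ge_0. auto.
    unfold M0. rewrite <- (pow2_abs (x - x0)).
    assert (0 <= Rabs (x - x0) <= Rabs (A - x0) + Rabs (B - x0)).
    { split. apply Rabs_pos. unfold Rabs; repeat destruct Rcase_abs; lra. }
    nra.
  - intros f Hf [M HM] eps He.
    assert (HM0 : 0 <= M) by (specialize (HM x0); pose proof (Rabs_pos (f x0)); lra).
    destruct (cont_eps f x0 (eps / 2) Hf ltac:(lra)) as [d [Hd Hdf]].
    set (Cc := 2 * M / d ^ 2).
    assert (Hd2 : 0 < d ^ 2) by (apply pow_lt; lra).
    assert (HCc : 0 <= Cc) by (unfold Cc; apply Rmult_le_pos; [lra| left; apply Rinv_0_lt_compat; lra]).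
    assert (HCd : Cc * d ^ 2 = 2 * M) by (unfold Cc; field; lra).
    assert (Hpt : forall x, Rabs (f x - f x0) <= eps / 2 + Cc * (x - x0) ^ 2).
    { intro x. assert (0 <= (x - x0) ^ 2) by apply pow2_ge_0.
      destruct (Rlt_le_dec (Rabs (x - x0)) d) as [Hl|Hl].
      - specialize (Hdf x Hl). nra.
      - assert (d ^ 2 <= (x - x0) ^ 2).
        { rewrite <- (pow2_abs (x - x0)). nra. }
        assert (Cc * d ^ 2 <= Cc * (x - x0) ^ 2) by (apply Rmult_le_compat_l; lra).
        pose proof (abs_inv _ _ (HM x)). pose proof (abs_inv _ _ (HM x0)).
        assert (Rabs (f x - f x0) <= 2 * M) by (apply Rabs_le; lra). lra. }
    destruct (H (eps / (2 * (Cc + 1)))) as [N HN].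
    { apply Rdiv_lt_0_compat; lra. }
    exists N. intros n Hn. specialize (HN n Hn). unfold Rdist in *. rewrite Rminus_0_r in HN.
    pose proof (HKc n x0) as Hkc. pose proof (HS n) as HSn.
    set (Sn := Kn p n x0 x0) in *.
    set (J := I (fun x => Kn p n x x0 ^ 2 * (f x - f x0))).
    set (Bq := I (fun x => Kn p n x x0 ^ 2 * (x - x0) ^ 2)).
    assert (E1 : I (fun x => Kn p n x x0 ^ 2 * f x) = J + f x0 * Sn).
    { unfold J, Sn. rewrite (I_ext I _ (fun x => 1 * (Kn p n x x0 ^ 2 * (f x - f x0)) + f x0 * (Kn p n x x0 ^ 2)))
        by (intros; ring).
      rewrite (I_comb2 I HI) by cont. rewrite (Kn_sq I HI p Hp). ring. }
    assert (E2 : Rabs J <= eps / 2 * Sn + Cc * Bq).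
    { unfold J, Bq, Sn. rewrite <- (Kn_sq I HI p Hp n x0).
      rewrite <- (I_comb2 I HI) by cont. apply (I_abs I HI). cont. cont.
      intro x. rewrite Rabs_mult. rewrite (Rabs_right (Kn p n x x0 ^ 2)) by (apply Rle_ge, pow2_ge_0).
      specialize (Hpt x). pose proof (pow2_ge_0 (Kn p n x x0)). nra. }
    assert (EB : eta_int I p x0 n (fun x => (x - x0) ^ 2) = Bq / Sn) by reflexivity.
    rewrite EB in HN.
    unfold eta_int. fold Sn. rewrite E1.
    replace ((J + f x0 * Sn) / Sn - f x0) with (J / Sn) by (field; lra).
    unfold Rdiv. rewrite Rabs_mult, (Rabs_right (/ Sn)) by (apply Rle_ge; left; apply Rinv_0_lt_compat; lra).
    assert (Hb : Rabs (Bq * / Sn) < eps / (2 * (Cc + 1))) by exact HN.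
    rewrite Rabs_mult, (Rabs_right (/ Sn)) in Hb by (apply Rle_ge; left; apply Rinv_0_lt_compat; lra).
    assert (Bq * / Sn <= Rabs Bq * / Sn) by (apply Rmult_le_compat_r; [left; apply Rinv_0_lt_compat; lra| apply Rle_abs]).
    assert (Rabs J * / Sn <= eps / 2 + Cc * (Bq * / Sn)).
    { apply Rmult_le_reg_r with Sn. lra. rewrite Rmult_assoc, Rinv_l by lra.
      replace ((eps / 2 + Cc * (Bq * / Sn)) * Sn) with (eps / 2 * Sn + Cc * Bq) by (field; lra). lra. }
    assert (Cc * (Rabs Bq * / Sn) <= Cc * (eps / (2 * (Cc + 1)))) by (apply Rmult_le_compat_l; lra).
    assert (Cc * (eps / (2 * (Cc + 1))) < eps / 2).
    { unfold Rdiv. apply Rmult_lt_reg_r with (2 * (Cc + 1)). lra.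
      replace (Cc * (eps * / (2 * (Cc + 1))) * (2 * (Cc + 1))) with (Cc * eps) by (field; lra).
      nra. }
    assert (Cc * (Bq * / Sn) <= Cc * (Rabs Bq * / Sn)) by (apply Rmult_le_compat_l; lra).
    lra.
Qed.
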